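(* Let $Y\in\mathbb{C}^{(n\times n)\cdot d}$, let $f$ be an NC function uniformly analytic in a uniformly open neighbourhood of $Y$, and let $f_\ell$, $f_\omega$ and the coefficients $\hat f_{\alpha,\beta;\omega}$ be as in the context. Then there is a constant $C>0$ such that for all $\ell\in\mathbb{N}$, $$\Big(\sum_{\substack{\alpha,\beta\in\mathbb{F}^+_n,\ \omega\in\mathbb{F}^+_d\\ |\alpha|=|\beta|=\ell+1=|\omega|+1}}|\hat f_{\alpha,\beta;\omega}|^2\Big)^{1/(2\ell)}\le C\,\|f_\ell\|_{\mathrm{CB}}^{1/\ell}.$$
   Context: $\mathbb{C}^{(k\times k)\cdot d}$ denotes column $d$-tuples of $k\times k$ matrices, with $\|X\|_{\mathrm{col}}$ the operator norm of the stacked $kd\times k$ matrix; the uniform topology is generated by the sets $\bigsqcup_m\{X\in\mathbb{C}^{(mk\times mk)\cdot d}:\|X-I_m\otimes Z\|_{\mathrm{col}}<r\}$. An NC function on a set $\Omega\subseteq\bigsqcup_k\mathbb{C}^{(k\times k)\cdot d}$ closed under direct sums is a map $f$ with $f(X)\in\mathbb{C}^{k\times k}$ at level $k$, $f(X\oplus X')=f(X)\oplus f(X')$, and $f(S^{-1}XS)=S^{-1}f(X)S$ whenever $X,S^{-1}XS\in\Omega$; it is uniformly analytic if $\Omega$ is uniformly open and $f$ is locally bounded in the uniform topology. $\mathbb{F}^+_k$ is the free monoid of words in $\{1,\dots,k\}$. Such $f$ has a Taylor–Taylor expansion at $Y$: there are unique $|\omega|$-linear maps $f_\omega:(\mathbb{C}^{n\times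 n})^{|\omega|}\to\mathbb{C}^{n\times n}$ ($\omega\in\mathbb{F}^+_d$) with $f(X)=\sum_\omega f_\omega\circ(X-I_m\otimes Y)^{\odot\omega}$ for $X$ near $Y$, where for $\omega=w_1\cdots w_\ell$, $f_\omega\circ(H_{w_1}\odot\cdots\odot H_{w_\ell})$ means the $m\times m$ block matrix obtained by applying $f_\omega$ to the Haagerup product of the $m\times m$ block matrices $H_{w_i}$ over $\mathbb{C}^{n\times n}$. Let $f_\ell$ be the $\ell$-linear map on $(\mathbb{C}^{(n\times n)\cdot d})^\ell$, $f_\ell(H^{(1)},\dots,H^{(\ell)})=\sum_{|\omega|=\ell}f_\omega(H^{(1)}_{w_1},\dots,H^{(\ell)}_{w_\ell})$, and $\|f_\ell\|_{\mathrm{CB}}$ its completely bounded norm (in the sense of Christensen–Sinclair), i.e. the cb-norm of its linearization on the $\ell$-fold Haagerup tensor product $E\otimes_h\cdots\otimes_hE$, where $E=\mathbb{C}^{(n\times n)\cdot d}$ carries the column operator space structure ($E^{i\times j}$ normed as $\mathbb{C}^{ind\times jn}$). Each $f_\omega$, $|\omega|=\ell$, is written uniquely as $f_\omega(G_1,\dots,G_\ell)=\sum_{\alpha,\beta}\hat f_{\alpha,\beta;\omega}E_{a_0,b_0}G_1E_{a_1,b_1}\cdots G_\ell E_{a_\ell,b_\ell}$, the sum over words $\alpha=a_0\cdots a_\ell,\beta=b_0\cdots b_\ell\in\mathbb{F}^+_n$, with $E_{i,j}$ the matrix units of $\mathbb{C}^{n\times n}$ and $\hat f_{\alpha,\beta;\omega}\in\mathbb{C}$.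 *)

(* Defs.v *)
From HB Require Import structures.
From mathcomp Require Import all_boot all_order all_algebra.
From mathcomp Require Import all_classical all_reals all_analysis.
From mathcomp Require Import complex mxtens.

Set Implicit Arguments.
Unset Strict Implicit.
Unset Printing Implicit Defensive.

Import Order.TTheory GRing.Theory Num.Theory.
Local Open Scope ring_scope.
Local Open Scope classical_set_scope.

Section NCDefs.
Variable R : realType.
Local Notation C := (complex R).

Definition cnorm2 (z : C) : R := complex.Re z ^+ 2 + complex.Im z ^+ 2.

Definition vnorm2 {k : nat} (v : 'cV[C]_k) : R := \sum_i cnorm2 (v i 0).

Definition opnorm {p q : nat} (A : 'M[C]_(p, q)) : R :=
  sup [set Num.sqrt (vnorm2 (A *m v)) | v in [set v : 'cV[C]_q | vnorm2 v <= 1]].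

(* ||X||_col : operator norm of the stacked (k d) x k matrix col(X_1,...,X_d) *)
Definition colnorm {d k : nat} (X : 'I_d -> 'M[C]_k) : R :=
  sup [set Num.sqrt (\sum_w vnorm2 (X w *m v))
      | v in [set v : 'cV[C]_k | vnorm2 v <= 1]].

Definition tsub {d k : nat} (X Z : 'I_d -> 'M[C]_k) : 'I_d -> 'M[C]_k :=
  fun w => X w - Z w.
Definition ampl {d k : nat} (m : nat) (Z : 'I_d -> 'M[C]_k) : 'I_d -> 'M[C]_(m * k) :=
  fun w => (1%:M : 'M[C]_m) *t Z w.
Definition dsum {d k k' : nat} (X : 'I_d -> 'M[C]_k) (X' : 'I_d -> 'M[C]_k') :
  'I_d -> 'M[C]_(k + k') := fun w => block_mx (X w) 0 0 (X' w).
Definition simil {d k : nat} (S : 'M[C]_k) (X : 'I_d -> 'M[C]_k) : 'I_d -> 'M[C]_k :=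
  fun w => invmx S *m X w *m S.

Definition nc_set {d : nat} (Omega : forall k, set ('I_d -> 'M[C]_k)) : Prop :=
  forall k k' (X : 'I_d -> 'M[C]_k) (X' : 'I_d -> 'M[C]_k'),
    Omega k X -> Omega k' X' -> Omega (k + k') (dsum X X').

Definition nc_function {d : nat} (Omega : forall k, set ('I_d -> 'M[C]_k))
  (f : forall k, ('I_d -> 'M[C]_k) -> 'M[C]_k) : Prop :=
  (forall k k' (X : 'I_d -> 'M[C]_k) (X' : 'I_d -> 'M[C]_k'),
     Omega k X -> Omega k' X' ->
     f (k + k') (dsum X X') = block_mx (f k X) 0 0 (f k' X'))
  /\ (forall k (S : 'M[C]_k) (X : 'I_d -> 'M[C]_k),
     S \in unitmx -> Omega k X -> Omega k (simil S X) ->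
     f k (simil S X) = invmx S *m f k X *m S).

(* uniform topology: basic ball of radius r around Z (level k) is
   the union over m of { X at level m k : ||X - I_m (x) Z||_col < r } *)
Definition uniformly_open {d : nat} (Omega : forall k, set ('I_d -> 'M[C]_k)) : Prop :=
  forall k (Z : 'I_d -> 'M[C]_k), Omega k Z ->
    exists2 r : R, 0 < r &
      forall m (X : 'I_d -> 'M[C]_(m * k)),
        colnorm (tsub X (ampl m Z)) < r -> Omega (m * k) X.

Definition uniformly_locally_bounded {d : nat}
  (Omega : forall k, set ('I_d -> 'M[C]_k))
  (f : forall k, ('I_d -> 'M[C]_k) -> 'M[C]_k) : Prop :=
  forall k (Z : 'I_d -> 'M[C]_k), Omega k Z ->
    exists2 r : R, 0 < r & exists M : R,
      forall m (X : 'I_d -> 'M[C]_(m * k)),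
        Omega (m * k) X -> colnorm (tsub X (ampl m Z)) < r ->
        opnorm (f (m * k) X) <= M.

(* block (p,q) (an n x n matrix) of an m x m block matrix over C^{n x n} *)
Definition blk {m n : nat} (H : 'M[C]_(m * n)) (p q : 'I_m) : 'M[C]_n :=
  \matrix_(i, j) H (mxtens_index (p, i)) (mxtens_index (q, j)).
Definition assemble {m n : nat} (B : 'I_m -> 'I_m -> 'M[C]_n) : 'M[C]_(m * n) :=
  \matrix_(i, j) B (mxtens_unindex i).1 (mxtens_unindex j).1
                   (mxtens_unindex i).2 (mxtens_unindex j).2.

(* phi o (H_1 (.) ... (.) H_l) : phi applied to the Haagerup product of the
   m x m block matrices H_i (over C^{n x n}) *)
Definition hprod {m n l : nat} (phi : seq 'M[C]_n -> 'M[C]_n)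
  (H : 'I_l -> 'M[C]_(m * n)) : 'M[C]_(m * n) :=
  assemble (fun p q =>
    \sum_(t : {ffun 'I_l.+1 -> 'I_m} | (t ord0 == p) && (t ord_max == q))
       phi [seq blk (H i) (t (widen_ord (leqnSn l) i)) (t (lift ord0 i)) | i : 'I_l]).

(* the degree-l part  sum_{|w| = l} f_w o (H_{w_1} (.) ... (.) H_{w_l}) *)
Definition homterm {d m n : nat} (fw : seq 'I_d -> seq 'M[C]_n -> 'M[C]_n)
  (l : nat) (H : 'I_d -> 'M[C]_(m * n)) : 'M[C]_(m * n) :=
  \sum_(w : l.-tuple 'I_d) hprod (fw w) (fun i => H (tnth w i)).

Definition mx_cvg {p q : nat} (u : nat -> 'M[C]_(p, q)) (L : 'M[C]_(p, q)) : Prop :=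
  forall eps : R, 0 < eps -> exists N0 : nat, forall N : nat, (N0 <= N)%N ->
    forall i j, cnorm2 ((u N - L) i j) < eps.

Definition multilinear_family {d n : nat}
  (fw : seq 'I_d -> seq 'M[C]_n -> 'M[C]_n) : Prop :=
  forall (w : seq 'I_d) (Gs : seq 'M[C]_n) (i : nat) (c : C) (G G' : 'M[C]_n),
    size Gs = size w -> (i < size w)%N ->
    fw w (set_nth 0 Gs i (c *: G + G')) =
    c *: fw w (set_nth 0 Gs i G) + fw w (set_nth 0 Gs i G').

Definition taylor_taylor {d n : nat} (Omega : forall k, set ('I_d -> 'M[C]_k))
  (f : forall k, ('I_d -> 'M[C]_k) -> 'M[C]_k) (Y : 'I_d -> 'M[C]_n)
  (fw : seq 'I_d -> seq 'M[C]_n -> 'M[C]_n) : Prop :=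
  exists2 r : R, 0 < r &
    forall m (X : 'I_d -> 'M[C]_(m * n)),
      colnorm (tsub X (ampl m Y)) < r ->
      Omega (m * n) X /\
      mx_cvg (fun N => \sum_(l < N) homterm fw l (tsub X (ampl m Y))) (f (m * n) X).

(* completely bounded norm of f_l (Christensen-Sinclair), E with the column
   operator space structure: M_m(E) is identified with d-tuples of
   (m n) x (m n) matrices normed by ||.||_col *)
Definition cbnorm {d n : nat} (fw : seq 'I_d -> seq 'M[C]_n -> 'M[C]_n) (l : nat) : R :=
  sup [set r : R | exists (m : nat) (Xs : 'I_l -> 'I_d -> 'M[C]_(m * n)),
         (forall i, colnorm (Xs i) <= 1) /\
         r = opnorm (\sum_(w : l.-tuple 'I_d) hprod (fw w) (fun i => Xs i (tnth w i)))].

Definition wordprod {n l : nat} (a b : (l.+1).-tuple 'I_n) (G : l.-tuple 'M[C]_n) :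
  'M[C]_n :=
  (\prod_(i < l) (delta_mx (tnth a (widen_ord (leqnSn l) i))
                           (tnth b (widen_ord (leqnSn l) i)) *m tnth G i))
  *m delta_mx (tnth a ord_max) (tnth b ord_max).

Definition hat_rep {d n : nat} (fw : seq 'I_d -> seq 'M[C]_n -> 'M[C]_n)
  (hat : seq 'I_n -> seq 'I_n -> seq 'I_d -> C) : Prop :=
  forall l (w : l.-tuple 'I_d) (G : l.-tuple 'M[C]_n),
    fw w G = \sum_(a : (l.+1).-tuple 'I_n) \sum_(b : (l.+1).-tuple 'I_n)
               hat a b w *: wordprod a b G.

Definition hatsum {d n : nat} (hat : seq 'I_n -> seq 'I_n -> seq 'I_d -> C) (l : nat) : R :=
  \sum_(a : (l.+1).-tuple 'I_n) \sum_(b : (l.+1).-tuple 'I_n) \sum_(w : l.-tuple 'I_d)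
     cnorm2 (hat a b w).

End NCDefs.

(* Main.v *)
Require Import Defs.
From HB Require Import structures.
From mathcomp Require Import all_boot all_order all_algebra.
From mathcomp Require Import all_classical all_reals all_analysis.
From mathcomp Require Import complex mxtens.
From mathcomp Require Import ring lra.

Import Order.TTheory GRing.Theory Num.Theory.
Local Open Scope ring_scope.
Local Open Scope classical_set_scope.
Set Implicit Arguments.
Unset Strict Implicit.
Unset Printing Implicit Defensive.
Section A.
Variable R : realType.
Local Notation C := (complex R).

Lemma cnorm2_ge0 (z : C) : 0 <= cnorm2 z.
Proof. by rewrite /cnorm2 addr_ge0 // sqr_ge0. Qed.

Lemma cnorm2M (x y : C) : cnorm2 (x * y) = cnorm2 x * cnorm2 y.
Proof. case: x => a b; case: y => c d; rewrite /cnorm2 /=. ring. Qed.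

Lemma cnorm2D (x y : C) : cnorm2 (x + y) <= 2 * (cnorm2 x + cnorm2 y).
Proof. case: x => a b; case: y => c d; rewrite /cnorm2 /=.
have h1 := sqr_ge0 (a - c); have h2 := sqr_ge0 (b - d). nra. Qed.

Lemma cnorm2_0 : cnorm2 (0 : C) = 0.
Proof. by rewrite /cnorm2 /= expr0n /= addr0. Qed.

Lemma cnorm2_1 : cnorm2 (1 : C) = 1.
Proof. by rewrite /cnorm2 /= expr1n expr0n /= addr0. Qed.

Lemma cnorm2_real (r : R) : cnorm2 ((r%:C)%C) = r ^+ 2.
Proof. by rewrite /cnorm2 /= expr0n /= addr0. Qed.

Lemma cnorm2_eq0 (z : C) : cnorm2 z = 0 -> z = 0.
Proof. case: z => a b; rewrite /cnorm2 /= => h.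
have ha := sqr_ge0 a; have hb := sqr_ge0 b.
have : a ^+ 2 = 0 by lra. have : b ^+ 2 = 0 by lra.
by move=> /eqP; rewrite sqrf_eq0 => /eqP -> /eqP; rewrite sqrf_eq0 => /eqP ->.
Qed.

Lemma cnorm2_sum (I : Type) (r : seq I) (F : I -> C) :
  cnorm2 (\sum_(i <- r) F i) <= 2 ^+ size r * \sum_(i <- r) cnorm2 (F i).
Proof.
elim: r => [|x r IH]; first by rewrite !big_nil cnorm2_0 mulr0.
rewrite !big_cons /=.
have h1 := cnorm2D (F x) (\sum_(j <- r) F j).
have h2 : 1 <= 2 ^+ size r :> R by rewrite exprn_ege1 // ler1n.
have h3 := cnorm2_ge0 (F x).
have h4 : 0 <= \sum_(j <- r) cnorm2 (F j) by rewrite sumr_ge0 // => j _; apply: cnorm2_ge0.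
rewrite exprS. nra.
Qed.

Definition vn2 {k : nat} (v : 'cV[C]_k) := vnorm2 v.

Lemma vnorm2_ge0 k (v : 'cV[C]_k) : 0 <= vnorm2 v.
Proof. by rewrite /vnorm2 sumr_ge0 // => i _; apply: cnorm2_ge0. Qed.

Lemma vnorm2_0 k : vnorm2 (0 : 'cV[C]_k) = 0.
Proof. by rewrite /vnorm2 big1 // => i _; rewrite mxE cnorm2_0. Qed.

Lemma vnorm2Z k (c : C) (v : 'cV[C]_k) : vnorm2 (c *: v) = cnorm2 c * vnorm2 v.
Proof. by rewrite /vnorm2 mulr_sumr; apply: eq_bigr => i _; rewrite mxE cnorm2M. Qed.

Lemma vnorm2_entry k (v : 'cV[C]_k) i : cnorm2 (v i 0) <= vnorm2 v.
Proof.
rewrite /vnorm2 (bigD1 i) //= lerDl sumr_ge0 // => j _; apply: cnorm2_ge0.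
Qed.

Lemma vnorm2_eq0 k (v : 'cV[C]_k) : vnorm2 v = 0 -> v = 0.
Proof.
move=> h; apply/matrixP => i j; rewrite ord1 mxE; apply: cnorm2_eq0.
apply/eqP; rewrite eq_le cnorm2_ge0 andbT -h; exact: vnorm2_entry.
Qed.

Lemma vnorm2_sum k (T : finType) (F : T -> 'cV[C]_k) :
  vnorm2 (\sum_t F t) <= 2 ^+ size (index_enum T) * \sum_t vnorm2 (F t).
Proof.
rewrite /vnorm2 exchange_big mulr_sumr /=; apply: ler_sum => i _.
rewrite summxE; exact: cnorm2_sum.
Qed.

Definition bnd {p q : nat} (A : 'M[C]_(p, q)) (c : R) :=
  0 <= c /\ forall v, vnorm2 (A *m v) <= c * vnorm2 v.

Lemma bnd_mul p q r (A : 'M[C]_(p, q)) (B : 'M[C]_(q, r)) a b :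
  bnd A a -> bnd B b -> bnd (A *m B) (a * b).
Proof.
move=> [a0 hA] [b0 hB]; split; first exact: mulr_ge0.
move=> v; rewrite -mulmxA; apply: (le_trans (hA _)).
by rewrite -mulrA ler_wpM2l.
Qed.

Lemma bnd_scale p q (A : 'M[C]_(p, q)) a (x : C) :
  bnd A a -> bnd (x *: A) (cnorm2 x * a).
Proof.
move=> [a0 hA]; split; first by rewrite mulr_ge0 // cnorm2_ge0.
by move=> v; rewrite -scalemxAl vnorm2Z -mulrA ler_wpM2l // cnorm2_ge0.
Qed.

Lemma bnd_le p q (A : 'M[C]_(p, q)) a b : bnd A a -> a <= b -> bnd A b.
Proof.
move=> [a0 hA] ab; split; first exact: le_trans ab.
move=> v; apply: (le_trans (hA v)); rewrite ler_wpM2r //; exact: vnorm2_ge0.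
Qed.

Lemma bnd_sum p q (T : finType) (F : T -> 'M[C]_(p, q)) (c : T -> R) :
  (forall t, bnd (F t) (c t)) ->
  bnd (\sum_t F t) (2 ^+ size (index_enum T) * \sum_t c t).
Proof.
move=> h; split.
  by rewrite mulr_ge0 ?exprn_ge0 // sumr_ge0 // => t _; case: (h t).
move=> v; rewrite mulmx_suml; apply: (le_trans (vnorm2_sum (fun t => F t *m v))).
rewrite -mulrA ler_wpM2l ?exprn_ge0 // mulr_suml; apply: ler_sum => t _.
by case: (h t).
Qed.

Definition bc p q (A : 'M[C]_(p, q)) : R :=
  \sum_i (2 ^+ size (index_enum 'I_q) * \sum_j cnorm2 (A i j)).

Lemma bnd_bc p q (A : 'M[C]_(p, q)) : bnd A (bc A).
Proof.
rewrite /bc; split.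
  apply: sumr_ge0 => i _; rewrite mulr_ge0 ?exprn_ge0 // sumr_ge0 // => j _.
  exact: cnorm2_ge0.
move=> v; rewrite /vnorm2 mulr_suml; apply: ler_sum => i _.
rewrite mxE; apply: (le_trans (cnorm2_sum _ _)).
rewrite -mulrA ler_wpM2l ?exprn_ge0 // mulr_suml; apply: ler_sum => j _.
rewrite cnorm2M ler_wpM2l ?cnorm2_ge0 //; exact: vnorm2_entry.
Qed.

Lemma bnd_of_unit p q (A : 'M[C]_(p, q)) :
  (forall u, vnorm2 u <= 1 -> vnorm2 (A *m u) <= 1) -> bnd A 1.
Proof.
move=> h; split => // v; rewrite mul1r.
have [s0|sp] := eqVneq (vnorm2 v) 0.
  have -> := vnorm2_eq0 s0; rewrite mulmx0 !vnorm2_0 //.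
have s_gt0 : 0 < vnorm2 v by rewrite lt_def sp vnorm2_ge0.
set t := (Num.sqrt (vnorm2 v))^-1.
have t2 : t ^+ 2 = (vnorm2 v)^-1 by rewrite /t exprVn sqr_sqrtr // ltW.
have e1 : vnorm2 ((t%:C)%C *: v) = 1 by rewrite vnorm2Z cnorm2_real t2 mulVf.
have e2 : vnorm2 ((t%:C)%C *: v) <= 1 by rewrite e1.
have := h _ e2; rewrite -scalemxAr vnorm2Z cnorm2_real t2 => hu.
have := ler_wpM2l (ltW s_gt0) hu; rewrite mulrA mulfV // mul1r mulr1 //.
Qed.

End A.

Section B.
Variable R : realType.
Local Notation C := (complex R).

Lemma opnorm_has_sup p q (A : 'M[C]_(p, q)) :
  has_sup [set Num.sqrt (vnorm2 (A *m v)) | v in [set v : 'cV[C]_q | vnorm2 v <= 1]].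
Proof.
split; first by exists (Num.sqrt (vnorm2 (A *m 0))); exists 0 => //=; rewrite vnorm2_0.
exists (Num.sqrt (bc A)) => r [v /= hv <-].
have [b0 hb] := bnd_bc A.
rewrite ler_sqrt //; apply: (le_trans (hb v)).
by rewrite -{2}(mulr1 (bc A)) ler_wpM2l.
Qed.

Lemma opnorm_ge p q (A : 'M[C]_(p, q)) v :
  vnorm2 v <= 1 -> Num.sqrt (vnorm2 (A *m v)) <= opnorm A.
Proof. move=> hv; apply: sup_upper_bound; first exact: opnorm_has_sup. by exists v. Qed.

Lemma opnorm_ge0 p q (A : 'M[C]_(p, q)) : 0 <= opnorm A.
Proof. by apply: le_trans (opnorm_ge A (_ : vnorm2 0 <= 1)); rewrite ?vnorm2_0 ?sqrtr_ge0. Qed.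

Lemma opnorm_le p q (A : 'M[C]_(p, q)) c : bnd A c -> opnorm A <= Num.sqrt c.
Proof.
move=> [c0 hc]; apply: ge_sup.
  by exists (Num.sqrt (vnorm2 (A *m 0))); exists 0 => //=; rewrite vnorm2_0.
move=> r [v /= hv <-].
rewrite ler_sqrt //; apply: (le_trans (hc v)).
by rewrite -{2}(mulr1 c) ler_wpM2l.
Qed.

Lemma entry_le_opnorm p q (A : 'M[C]_(p, q)) i j : cnorm2 (A i j) <= opnorm A ^+ 2.
Proof.
have h1 : vnorm2 (delta_mx j 0 : 'cV[C]_q) <= 1.
  rewrite /vnorm2 (bigD1 j) //= big1 ?addr0.
    by rewrite mxE !eqxx /= cnorm2_1.
  by move=> k /negbTE kj; rewrite mxE kj /= cnorm2_0.
have h2 := opnorm_ge A h1.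
have h3 : cnorm2 (A i j) <= vnorm2 (A *m delta_mx j 0).
  apply: le_trans (vnorm2_entry _ i); rewrite mxE (bigD1 j) //= big1 ?addr0.
    by rewrite mxE !eqxx mulr1.
  by move=> k /negbTE kj; rewrite mxE kj /= mulr0.
apply: (le_trans h3); rewrite -(sqr_sqrtr (vnorm2_ge0 _)).
by rewrite lerXn2r // ?nnegrE ?sqrtr_ge0 // (le_trans _ h2) ?sqrtr_ge0.
Qed.

Lemma colnorm_has_sup d k (X : 'I_d -> 'M[C]_k) :
  has_sup [set Num.sqrt (\sum_w vnorm2 (X w *m v))
      | v in [set v : 'cV[C]_k | vnorm2 v <= 1]].
Proof.
split; first by exists (Num.sqrt (\sum_w vnorm2 (X w *m 0))); exists 0 => //=; rewrite vnorm2_0.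
exists (Num.sqrt (\sum_w bc (X w))) => r [v /= hv <-].
rewrite ler_sqrt; last by rewrite sumr_ge0 // => w _; case: (bnd_bc (X w)).
apply: ler_sum => w _; have [b0 hb] := bnd_bc (X w).
apply: (le_trans (hb v)); by rewrite -{2}(mulr1 (bc _)) ler_wpM2l.
Qed.

Lemma colnorm_bnd d k (X : 'I_d -> 'M[C]_k) w : colnorm X <= 1 -> bnd (X w) 1.
Proof.
move=> hX; apply: bnd_of_unit => u hu.
have h1 : Num.sqrt (\sum_w vnorm2 (X w *m u)) <= 1.
  apply: le_trans hX; apply: sup_upper_bound; first exact: colnorm_has_sup.
  by exists u.
have h2 : \sum_w vnorm2 (X w *m u) <= 1.
  by rewrite -(ler_sqrt _ ler01) sqrtr1.
apply: le_trans h2; rewrite (bigD1 w) //= lerDl sumr_ge0 // => w' _.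
exact: vnorm2_ge0.
Qed.

Lemma colnorm_le1 d k (X : 'I_d -> 'M[C]_k) :
  (forall v, vnorm2 v <= 1 -> \sum_w vnorm2 (X w *m v) <= 1) -> colnorm X <= 1.
Proof.
move=> h; apply: ge_sup.
  by exists (Num.sqrt (\sum_w vnorm2 (X w *m 0))); exists 0 => //=; rewrite vnorm2_0.
move=> r [v /= hv <-]; rewrite -sqrtr1 ler_sqrt //; exact: h.
Qed.

End B.

Section Cpart.
Variable R : realType.
Local Notation C := (complex R).

Lemma sum_tens (V : nmodType) m n (G : 'I_(m * n) -> V) :
  \sum_k G k = \sum_(p : 'I_m) \sum_(i : 'I_n) G (mxtens_index (p, i)).
Proof.
rewrite pair_big /= (reindex (@mxtens_index m n)) /=.
  by apply: eq_bigr => [[p i]] _.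
by exists (@mxtens_unindex m n) => x _; rewrite (mxtens_indexK, mxtens_unindexK).
Qed.

Lemma blk_assemble m n (B : 'I_m -> 'I_m -> 'M[C]_n) p q : blk (assemble B) p q = B p q.
Proof. by apply/matrixP => i j; rewrite !mxE !mxtens_indexK. Qed.

Lemma blk_inj m n (X Y : 'M[C]_(m * n)) :
  (forall p q, blk X p q = blk Y p q) -> X = Y.
Proof.
move=> h; apply/matrixP => i j.
case: (mxtens_indexP i) => p a; case: (mxtens_indexP j) => q b.
by have := congr1 (fun M : 'M[C]_n => M a b) (h p q); rewrite !mxE.
Qed.

Lemma blkD m n (X Y : 'M[C]_(m * n)) p q : blk (X + Y) p q = blk X p q + blk Y p q.
Proof. by apply/matrixP => i j; rewrite !mxE. Qed.

Lemma blkZ m n (c : C) (X : 'M[C]_(m * n)) p q : blk (c *: X) p q = c *: blk X p q.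
Proof. by apply/matrixP => i j; rewrite !mxE. Qed.

Lemma blk_sum m n (T : finType) (F : T -> 'M[C]_(m * n)) p q :
  blk (\sum_t F t) p q = \sum_t blk (F t) p q.
Proof. by apply/matrixP => i j; rewrite !mxE !summxE; apply: eq_bigr => t _; rewrite mxE. Qed.

Lemma blk_mul m n (X Y : 'M[C]_(m * n)) p q :
  blk (X *m Y) p q = \sum_r blk X p r *m blk Y r q.
Proof.
apply/matrixP => i j; rewrite !mxE summxE sum_tens; apply: eq_bigr => r _.
by rewrite mxE; apply: eq_bigr => k _; rewrite !mxE.
Qed.

Lemma blk1 m n p q : blk (1%:M : 'M[C]_(m * n)) p q = (p == q)%:R *: 1%:M.
Proof.
apply/matrixP => i j; rewrite !mxE (inj_eq (can_inj (@mxtens_indexK m n))) xpair_eqE.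
by case: (p == q); case: (i == j); rewrite /= ?mulr1 ?mulr0 ?mul0r.
Qed.

Definition Kmx m n (a b : 'I_n) : 'M[C]_(m * n) := (1%:M : 'M[C]_m) *t delta_mx a b.

Lemma blkK m n (a b : 'I_n) p q : blk (Kmx m a b) p q = (p == q)%:R *: delta_mx a b.
Proof. by apply/matrixP => i j; rewrite /Kmx [LHS]mxE tensmxE !mxE. Qed.

Lemma Kmx_apply m n (a b : 'I_n) (v : 'cV[C]_(m * n)) p i :
  (Kmx m a b *m v) (mxtens_index (p, i)) 0 = (i == a)%:R * v (mxtens_index (p, b)) 0.
Proof.
rewrite mxE sum_tens (bigD1 p) //= [X in _ + X]big1 ?addr0; last first.
  move=> r rp; rewrite big1 // => j _.
  by rewrite /Kmx tensmxE !mxE eq_sym (negbTE rp) /= !mul0r.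
rewrite (bigD1 b) //= [X in _ + X]big1 ?addr0; last first.
  by move=> j jb; rewrite /Kmx tensmxE !mxE (negbTE jb) andbF /= mulr0 mul0r.
by rewrite /Kmx tensmxE !mxE !eqxx /= andbT mul1r.
Qed.

Lemma bndK m n (a b : 'I_n) : bnd (Kmx m a b) 1.
Proof.
split => // v; rewrite mul1r /vnorm2 !sum_tens; apply: ler_sum => p _.
rewrite (bigD1 a) //= big1 ?addr0; last first.
  by move=> i /negbTE ia; rewrite Kmx_apply ia mul0r cnorm2_0.
rewrite Kmx_apply eqxx mul1r (bigD1 b) //= lerDl sumr_ge0 // => j _.
exact: cnorm2_ge0.
Qed.

End Cpart.

Section Dpart.
Variable R : realType.
Local Notation C := (complex R).

Section Ext.
Variables (m k : nat).
Definition ext (tx : {ffun 'I_k.+1 -> 'I_m} * 'I_m) : {ffun 'I_k.+2 -> 'I_m} :=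
  [ffun j : 'I_k.+2 => if insub (val j) is Some j' then tx.1 j' else tx.2].

Lemma extE1 tx (j : 'I_k.+2) (jj : 'I_k.+1) : val j = val jj -> ext tx j = tx.1 jj.
Proof.
move=> e; rewrite ffunE; have h : (val j < k.+1)%N by rewrite e ltn_ord.
by rewrite (insubT (fun x => (x < k.+1)%N) h); congr (tx.1 _); apply: val_inj; rewrite /= e.
Qed.

Arguments extE1 tx j jj : clear implicits.

Lemma extE2 tx (j : 'I_k.+2) : val j = k.+1 -> ext tx j = tx.2.
Proof. by move=> e; rewrite ffunE insubF // e ltnn. Qed.

Definition unext (t : {ffun 'I_k.+2 -> 'I_m}) : {ffun 'I_k.+1 -> 'I_m} * 'I_m :=
  ([ffun j : 'I_k.+1 => t (widen_ord (leqnSn _) j)], t ord_max).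

Lemma ext_bij : bijective ext.
Proof.
exists unext.
  move=> [t x]; rewrite /unext; congr (_, _); last by rewrite extE2.
  by apply/ffunP => j; rewrite ffunE (extE1 _ _ j).
move=> t; apply/ffunP => j; have [lt|ge] := ltnP (val j) k.+1.
  by rewrite (extE1 _ _ (Ordinal lt)) // ffunE; congr (t _); apply: val_inj.
have e : val j = k.+1 by apply/eqP; rewrite eqn_leq ge -ltnS ltn_ord.
by rewrite extE2 //=; congr (t _); apply: val_inj; rewrite /= e.
Qed.
End Ext.
Arguments extE1 {m k} tx j jj.

Lemma path_prod m n k (F : 'I_k -> 'M[C]_(m * n)) p q :
  \sum_(t : {ffun 'I_k.+1 -> 'I_m} | (t ord0 == p) && (t ord_max == q))
     \prod_(i < k) blk (F i) (t (widen_ord (leqnSn k) i)) (t (lift ord0 i))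
  = blk (\prod_(i < k) F i) p q.
Proof.
elim: k F p q => [|k IH] F p q.
  rewrite big_ord0.
  have -> : (1 : 'M[C]_(m * n)) = 1%:M by [].
  rewrite blk1.
  have em : (ord_max : 'I_1) = ord0 by apply: val_inj.
  rewrite (reindex (fun x : 'I_m => [ffun _ : 'I_1 => x])) /=; last first.
    exists (fun t : {ffun 'I_1 -> 'I_m} => t ord0) => [x _|t _]; first by rewrite ffunE.
    by apply/ffunP => j; rewrite ffunE (ord1 j).
  under eq_bigl => x do rewrite !ffunE.
  under eq_bigr => x _ do rewrite big_ord0.
  have [<-|pq] := eqVneq p q.
    by rewrite (eq_bigl (fun x => x == p)) ?big_pred1_eq ?scale1r // => x; rewrite andbb.
  rewrite big_pred0 ?scale0r // => x; apply/negbTE; apply/andP => [[/eqP e1 /eqP e2]].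
  by move: pq; rewrite -e1 -e2 eqxx.
pose Pk (t : {ffun 'I_k.+1 -> 'I_m}) :=
  \prod_(i < k) blk (F (widen_ord (leqnSn k) i)) (t (widen_ord (leqnSn k) i)) (t (lift ord0 i)).
transitivity (\sum_(tx : {ffun 'I_k.+1 -> 'I_m} * 'I_m | (tx.1 ord0 == p) && (tx.2 == q))
     (Pk tx.1 * blk (F ord_max) (tx.1 ord_max) tx.2)).
  rewrite (reindex (@ext m k)); last by apply: onW_bij; exact: ext_bij.
  apply: eq_big => [tx|tx _].
    by rewrite (extE1 _ _ ord0) // (extE2 _ (j := ord_max)).
  rewrite big_ord_recr /=; congr (_ * _).
    apply: eq_bigr => i _; congr blk; apply: extE1 => //=.
  by congr blk; [apply: extE1| apply: extE2].
rewrite -(pair_big_dep (fun t : {ffun 'I_k.+1 -> 'I_m} => t ord0 == p) (fun _ x => x == q)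
   (fun t x => Pk t * blk (F ord_max) (t ord_max) x)) /=.
under eq_bigr => t _ do rewrite big_pred1_eq.
rewrite big_ord_recr /= -mulmxE blk_mul.
rewrite (partition_big (fun t : {ffun 'I_k.+1 -> 'I_m} => t ord_max) xpredT) //=.
apply: eq_bigr => r _; rewrite -IH mulmxE mulr_suml.
by apply: eq_big => t // /andP[_ /eqP ->].
Qed.

End Dpart.

Section Epart.
Variable R : realType.
Local Notation C := (complex R).
Local Notation Kmx := (Kmx R).

Lemma hprod_fact m n d l (fw : seq 'I_d -> seq 'M[C]_n -> 'M[C]_n)
  (hat : seq 'I_n -> seq 'I_n -> seq 'I_d -> C) :
  hat_rep fw hat -> forall (w : l.-tuple 'I_d) (H : 'I_l -> 'M[C]_(m * n)),
  hprod (fw w) H = \sum_(a : (l.+1).-tuple 'I_n) \sum_(b : (l.+1).-tuple 'I_n)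
     hat a b w *: ((\prod_(i < l) (Kmx m (tnth a (widen_ord (leqnSn l) i))
                                   (tnth b (widen_ord (leqnSn l) i)) *m H i))
                   *m Kmx m (tnth a ord_max) (tnth b ord_max)).
Proof.
move=> hr w H; apply: blk_inj => p q; rewrite blk_assemble.
pose G (t : {ffun 'I_l.+1 -> 'I_m}) :=
  [tuple blk (H i) (t (widen_ord (leqnSn l) i)) (t (lift ord0 i)) | i < l].
transitivity (\sum_(t : {ffun 'I_l.+1 -> 'I_m} | (t ord0 == p) && (t ord_max == q))
   fw w (G t)); first by apply: eq_bigr.
under eq_bigr => t _ do rewrite hr.
rewrite exchange_big blk_sum; apply: eq_bigr => a _.
rewrite exchange_big blk_sum; apply: eq_bigr => b _.
rewrite blkZ -scaler_sumr; congr (_ *: _).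
rewrite [RHS]blk_mul [RHS](bigD1 q) //= [X in _ = _ + X]big1 ?addr0; last first.
  by move=> r rq; rewrite blkK (negbTE rq) scale0r mulmx0.
rewrite blkK eqxx scale1r /wordprod -mulmx_suml; congr (_ *m _).
rewrite -path_prod; apply: eq_bigr => t _; apply: eq_bigr => i _.
rewrite [RHS]blk_mul [RHS](bigD1 (t (widen_ord (leqnSn l) i))) //= [X in _ = _ + X]big1 ?addr0; last first.
  by move=> r rq; rewrite blkK eq_sym (negbTE rq) scale0r mul0mx.
by rewrite blkK eqxx scale1r tnth_mktuple.
Qed.

End Epart.

Section Fpart.
Variable R : realType.
Local Notation C := (complex R).
Local Notation Kmx := (Kmx R).

Lemma bnd_prod1 N k (G : 'I_k -> 'M[C]_N) :
  (forall i, bnd (G i) 1) -> bnd (\prod_(i < k) G i) 1.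
Proof.
elim: k G => [|k IH] G h.
  rewrite big_ord0; split => // v; rewrite mul1r.
  by have -> : (1 : 'M[C]_N) *m v = v by exact: mul1mx.
rewrite big_ord_recr /= -mulmxE.
have := bnd_mul (IH (fun i => G (widen_ord (leqnSn k) i)) (fun i => h _)) (h ord_max).
by rewrite mulr1.
Qed.

Definition UB n d l (hat : seq 'I_n -> seq 'I_n -> seq 'I_d -> C) : R :=
  2 ^+ size (index_enum (l.-tuple 'I_d : finType)) *
  \sum_(w : l.-tuple 'I_d)
   (2 ^+ size (index_enum ((l.+1).-tuple 'I_n : finType)) *
    \sum_(a : (l.+1).-tuple 'I_n)
     (2 ^+ size (index_enum ((l.+1).-tuple 'I_n : finType)) *
      \sum_(b : (l.+1).-tuple 'I_n) (cnorm2 (hat a b w) * (1 * 1)))).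

Lemma cb_elem_le n d l (fw : seq 'I_d -> seq 'M[C]_n -> 'M[C]_n)
  (hat : seq 'I_n -> seq 'I_n -> seq 'I_d -> C) :
  hat_rep fw hat -> forall m (Xs : 'I_l -> 'I_d -> 'M[C]_(m * n)),
  (forall i, colnorm (Xs i) <= 1) ->
  opnorm (\sum_(w : l.-tuple 'I_d) hprod (fw w) (fun i => Xs i (tnth w i)))
    <= Num.sqrt (UB l hat).
Proof.
move=> hr m Xs hX; apply: opnorm_le.
under eq_bigr => w _ do rewrite (hprod_fact hr).
apply: bnd_sum => w; apply: bnd_sum => a; apply: bnd_sum => b.
apply: bnd_scale; apply: bnd_mul; last exact: bndK.
apply: bnd_prod1 => i.
have := bnd_mul (@bndK R m _ (tnth a (widen_ord (leqnSn l) i)) (tnth b (widen_ord (leqnSn l) i)))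
   (colnorm_bnd (tnth w i) (hX i)).
by rewrite mulr1.
Qed.

Lemma cb_set_has_sup n d l (fw : seq 'I_d -> seq 'M[C]_n -> 'M[C]_n)
  (hat : seq 'I_n -> seq 'I_n -> seq 'I_d -> C) :
  hat_rep fw hat ->
  has_sup [set r : R | exists (m : nat) (Xs : 'I_l -> 'I_d -> 'M[C]_(m * n)),
         (forall i, colnorm (Xs i) <= 1) /\
         r = opnorm (\sum_(w : l.-tuple 'I_d) hprod (fw w) (fun i => Xs i (tnth w i)))].
Proof.
move=> hr; split.
  exists (opnorm (\sum_(w : l.-tuple 'I_d) hprod (fw w) (fun i => (fun _ _ => 0 : 'M[C]_(1 * n)) i (tnth w i)))).
  exists 1%N, (fun _ _ => 0); split => // i; apply: colnorm_le1 => v _.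
  by rewrite big1 // => w _; rewrite mul0mx vnorm2_0.
exists (Num.sqrt (UB l hat)) => r [m [Xs [hX ->]]]; exact: cb_elem_le.
Qed.

Lemma cbnorm_ge n d l (fw : seq 'I_d -> seq 'M[C]_n -> 'M[C]_n)
  (hat : seq 'I_n -> seq 'I_n -> seq 'I_d -> C) :
  hat_rep fw hat -> forall m (Xs : 'I_l -> 'I_d -> 'M[C]_(m * n)),
  (forall i, colnorm (Xs i) <= 1) ->
  opnorm (\sum_(w : l.-tuple 'I_d) hprod (fw w) (fun i => Xs i (tnth w i)))
    <= cbnorm fw l.
Proof.
move=> hr m Xs hX; apply: sup_upper_bound; first exact: cb_set_has_sup hr.
by exists m, Xs.
Qed.

Lemma cbnorm_ge0 n d l (fw : seq 'I_d -> seq 'M[C]_n -> 'M[C]_n)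
  (hat : seq 'I_n -> seq 'I_n -> seq 'I_d -> C) :
  hat_rep fw hat -> 0 <= cbnorm fw l.
Proof.
move=> hr; apply: le_trans (cbnorm_ge hr (m := 1%N) (Xs := fun _ _ => 0) _).
  exact: opnorm_ge0.
move=> i; apply: colnorm_le1 => v _.
by rewrite big1 // => w _; rewrite mul0mx vnorm2_0.
Qed.

End Fpart.

Section Gpart.
Variable R : realType.
Local Notation C := (complex R).
Local Notation Kmx := (Kmx R).

Lemma prod_has0 N k (G : 'I_k -> 'M[C]_N) i : G i = 0 -> \prod_(j < k) G j = 0.
Proof.
elim: k G i => [|k IH] G i Gi; first by case: (i).
rewrite big_ord_recr /=; have [e|ne] := eqVneq i ord_max; first by rewrite -e Gi mulr0.
have lt : (val i < k)%N.
  have := ltn_ord i; rewrite ltnS leq_eqVlt => /orP[/eqP e|//].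
  by move: ne; rewrite (_ : i = ord_max) ?eqxx //; apply: val_inj.
rewrite (IH _ (Ordinal lt)) ?mul0r //=; rewrite -Gi; congr G; exact: val_inj.
Qed.

Definition T1 n (M : 'M[C]_n) : 'M[C]_(1 * n) := (1%:M : 'M[C]_1) *t M.

Lemma T1_mul n (M N : 'M[C]_n) : T1 (M *m N) = T1 M *m T1 N.
Proof. by rewrite /T1 tensmx_mul mul1mx. Qed.

Lemma T1_1 n : T1 (1 : 'M[C]_n) = 1.
Proof.
apply/matrixP => i j; case: (mxtens_indexP i) => p x; case: (mxtens_indexP j) => q y.
rewrite /T1 tensmxE (ord1 p) (ord1 q) !mxE eqxx mul1r.
by rewrite (inj_eq (can_inj (@mxtens_indexK 1 n))) xpair_eqE eqxx.
Qed.

Lemma T1_prod n k (G : 'I_k -> 'M[C]_n) : \prod_(i < k) T1 (G i) = T1 (\prod_(i < k) G i).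
Proof.
elim: k G => [|k IH] G; first by rewrite !big_ord0 T1_1.
by rewrite !big_ord_recr /= IH -!mulmxE T1_mul.
Qed.

Lemma T1_entry n (M : 'M[C]_n) i j : T1 M (mxtens_index (ord0, i)) (mxtens_index (ord0, j)) = M i j.
Proof. by rewrite /T1 tensmxE mxE mul1r. Qed.

Lemma chain n (x y u v : nat -> 'I_n) k :
  (\prod_(i < k) (delta_mx (x i) (y i) *m delta_mx (u i) (v i.+1))) *m delta_mx (x k) (y k)
  = (\prod_(i < k) ((y i == u i) && (v i.+1 == x i.+1))%:R : C) *: delta_mx (x 0%N) (y k).
Proof.
elim: k => [|k IH].
  by rewrite !big_ord0 scale1r; exact: mul1mx.
rewrite !big_ord_recr /= -mulmxE !mulmxA IH -!scalemxAl mul_delta_mx_cond.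
case: (y k == u k); rewrite /= ?mulr1n ?mulr0n ?mul0mx ?scaler0 ?mulr0 ?scale0r //.
rewrite mul_delta_mx_cond.
case: (v k.+1 == x k.+1); rewrite /= ?mulr1n ?mulr0n ?mulr1 ?scaler0 ?mulr0 ?scale0r //.
Qed.

End Gpart.

Section Hpart.
Variable R : realType.
Local Notation C := (complex R).
Local Notation Kmx := (Kmx R).

Lemma coefeq n l (a b a' b' : (l.+1).-tuple 'I_n) :
  (\prod_(i < l) ((tnth b' (inord i) == tnth b (inord i)) &&
                  (tnth a (inord i.+1) == tnth a' (inord i.+1)))%:R : C) *
  ((tnth a (inord 0) == tnth a' (inord 0)) && (tnth b (inord l) == tnth b' (inord l)))%:R
  = ((a' == a) && (b' == b))%:R.
Proof.
case: (boolP ((a' == a) && (b' == b))) => [/andP[/eqP -> /eqP ->]|ne].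
  by rewrite !eqxx /= mulr1 big1 // => i _; rewrite !eqxx.
apply/eqP; rewrite mulf_eq0; apply/negPn/negP => /norP [hc he].
rewrite pnatr_eq0 eqb0 negbK in he; case/andP: he => /eqP he1 /eqP he2.
have hi : forall i : 'I_l, (tnth b' (inord i) == tnth b (inord i)) &&
                  (tnth a (inord i.+1) == tnth a' (inord i.+1)).
  move=> i; apply/negPn/negP => nb; case/negP: hc; apply/prodf_eq0; exists i => //.
  by rewrite (negbTE nb).
case/negP: ne; apply/andP; split; apply/eqP; apply: eq_from_tnth => j;
  rewrite -(inord_val j); move: (ltn_ord j).
  case: (nat_of_ord j) => [|i] hj; first by rewrite he1.
  have hj' : (i < l)%N by [].
  by have /andP[_ /eqP ->] := hi (Ordinal hj').
have [jl|lj] := ltnP (nat_of_ord j) l => hj.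
  by have /andP[/eqP -> _] := hi (Ordinal jl).
have -> : nat_of_ord j = l by apply/eqP; rewrite eqn_leq lj -ltnS hj.
by rewrite he2.
Qed.

End Hpart.

Section Ipart.
Variable R : realType.
Local Notation C := (complex R).
Local Notation Kmx := (Kmx R).

Lemma coef_le n d l (fw : seq 'I_d -> seq 'M[C]_n -> 'M[C]_n)
  (hat : seq 'I_n -> seq 'I_n -> seq 'I_d -> C) :
  hat_rep fw hat -> forall (a b : (l.+1).-tuple 'I_n) (w0 : l.-tuple 'I_d),
  cnorm2 (hat a b w0) <= cbnorm fw l ^+ 2.
Proof.
move=> hr a b w0.
pose Xs : 'I_l -> 'I_d -> 'M[C]_(1 * n) := fun i u =>
  if u == tnth w0 i then Kmx 1 (tnth b (widen_ord (leqnSn l) i)) (tnth a (lift ord0 i)) else 0.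
have hX : forall i, colnorm (Xs i) <= 1.
  move=> i; apply: colnorm_le1 => v hv; rewrite (bigD1 (tnth w0 i)) //= big1 ?addr0.
    rewrite /Xs eqxx; have [_ h] := @bndK R 1 _ (tnth b (widen_ord (leqnSn l) i)) (tnth a (lift ord0 i)).
    by apply: le_trans (h v) _; rewrite mul1r.
  by move=> u ne; rewrite /Xs (negbTE ne) mul0mx vnorm2_0.
have h1 := cbnorm_ge hr hX.
set F := \sum_(w : l.-tuple 'I_d) _ in h1.
have h2 := entry_le_opnorm F (mxtens_index (ord0, tnth a (inord 0)))
                              (mxtens_index (ord0, tnth b (inord l))).
suff e : F (mxtens_index (ord0, tnth a (inord 0))) (mxtens_index (ord0, tnth b (inord l)))
         = hat a b w0.
  rewrite e in h2; apply: (le_trans h2); rewrite lerXn2r // nnegrE ?opnorm_ge0 //.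
  exact: le_trans (opnorm_ge0 _) h1.
rewrite /F; under eq_bigr => w _ do rewrite (hprod_fact hr).
rewrite (bigD1 w0) //= [X in _ + X]big1 ?addr0; last first.
  move=> w ne; apply: big1 => a' _; apply: big1 => b' _.
  have [i hi] : exists i, tnth w i != tnth w0 i.
    apply/existsP; case: (boolP [exists x, tnth w x != tnth w0 x]) => //.
    rewrite negb_exists => /forallP hall; case/negP: ne; apply/eqP.
    by apply: eq_from_tnth => i; have := hall i; rewrite negbK => /eqP.
  rewrite (@prod_has0 _ _ _ _ i) ?mul0mx ?scaler0 //.
  by rewrite /Xs (negbTE hi) mulmx0.
rewrite /Xs summxE; under eq_bigr => a' _ do rewrite summxE.
transitivity (\sum_(a' : (l.+1).-tuple 'I_n) \sum_(b' : (l.+1).-tuple 'I_n)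
   hat a' b' w0 * ((a' == a) && (b' == b))%:R).
  apply: eq_bigr => a' _; apply: eq_bigr => b' _.
  rewrite mxE; congr (_ * _).
  under eq_bigr => i _ do rewrite eqxx.
  have eK : forall x y : 'I_n, Kmx 1 x y = T1 (delta_mx x y) by [].
  under eq_bigr => i _ do rewrite !eK -T1_mul.
  rewrite !eK T1_prod -T1_mul T1_entry.
  have ew : forall (t : (l.+1).-tuple 'I_n) (i : 'I_l),
      tnth t (widen_ord (leqnSn l) i) = tnth t (inord i).
    by move=> t i; congr tnth; apply: val_inj; rewrite /= inordK // ltnS ltnW.
  have el : forall (t : (l.+1).-tuple 'I_n) (i : 'I_l),
      tnth t (lift ord0 i) = tnth t (inord i.+1).
    by move=> t i; congr tnth; apply: val_inj; rewrite /= inordK // ltnS.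
  have em : forall (t : (l.+1).-tuple 'I_n), tnth t ord_max = tnth t (inord l).
    by move=> t; congr tnth; apply: val_inj; rewrite /= inordK.
  under eq_bigr => i _ do rewrite !ew el.
  rewrite !em.
  have := @chain R n (fun j => tnth a' (inord j)) (fun j => tnth b' (inord j))
                (fun j => tnth b (inord j)) (fun j => tnth a (inord j)) l.
  move=> /= ->; rewrite !mxE; exact: coefeq.
rewrite (bigD1 a) //= [X in _ + X]big1 ?addr0; last first.
  by move=> a' ne; apply: big1 => b' _; rewrite (negbTE ne) /= mulr0.
rewrite (bigD1 b) //= !eqxx /= mulr1 [X in _ + X]big1 ?addr0 // => b' ne.
by rewrite (negbTE ne) mulr0.
Qed.

End Ipart.

Lemma hatsum_le (R : realType) n d l (fw : seq 'I_d -> seq 'M[complex R]_n -> 'M[complex R]_n)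
  (hat : seq 'I_n -> seq 'I_n -> seq 'I_d -> complex R) :
  hat_rep fw hat ->
  hatsum hat l <= cbnorm fw l ^+ 2 * ((n ^ l.+1 * n ^ l.+1 * d ^ l)%N)%:R.
Proof.
move=> hr; rewrite /hatsum.
apply: (@le_trans _ _ (\sum_(a : (l.+1).-tuple 'I_n) \sum_(b : (l.+1).-tuple 'I_n)
   \sum_(w : l.-tuple 'I_d) cbnorm fw l ^+ 2)).
  apply: ler_sum => a _; apply: ler_sum => b _; apply: ler_sum => w _.
  exact: coef_le.
rewrite !sumr_const !card_tuple !card_ord -!mulrnA mulr_natr.
by rewrite -mulnA [(n ^ l.+1 * (n ^ l.+1 * d ^ l))%N]mulnC [(n ^ l.+1 * d ^ l)%N]mulnC !mulnA.
Qed.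

Theorem mainTheorem11 (R : realType) (n d : nat)
  (Y : 'I_d -> 'M[complex R]_n)
  (Omega : forall k, set ('I_d -> 'M[complex R]_k))
  (f : forall k, ('I_d -> 'M[complex R]_k) -> 'M[complex R]_k)
  (fw : seq 'I_d -> seq 'M[complex R]_n -> 'M[complex R]_n)
  (hat : seq 'I_n -> seq 'I_n -> seq 'I_d -> complex R) :
  nc_set Omega -> uniformly_open Omega -> Omega n Y ->
  nc_function Omega f -> uniformly_locally_bounded Omega f ->
  multilinear_family fw -> taylor_taylor Omega f Y fw ->
  hat_rep fw hat ->
  exists2 C : R, 0 < C &
    forall l : nat, (0 < l)%N ->
      powR (hatsum hat l) ((l.*2)%:R)^-1 <= C * powR (cbnorm fw l) (l%:R)^-1.
Proof.
move=> _ _ _ _ _ _ _ hr.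
exists ((n.+1 * n.+1 * d.+1)%N%:R); first by rewrite ltr0n !muln_gt0.
move=> l l0.
set cb := cbnorm fw l.
have cb0 : 0 <= cb by exact: cbnorm_ge0 hr.
set N := (n ^ l.+1 * n ^ l.+1 * d ^ l)%N.
set K := (n.+1 * n.+1 * d.+1)%N.
set e := ((l.*2)%:R)^-1 : R.
have e0 : 0 <= e by rewrite invr_ge0 ler0n.
have l0R : (l%:R : R) != 0 by rewrite pnatr_eq0 -lt0n.
have hN : (N <= K ^ (l.*2))%N.
  rewrite /N /K !expnMn.
  have A : (n ^ l.+1 <= n.+1 ^ l.*2)%N.
    apply: (@leq_trans (n.+1 ^ l.+1)); first by rewrite leq_exp2r.
    by apply: leq_pexp2l => //; rewrite -addnn -[X in (X < _)%N](addn0 l) ltn_add2l.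
  have B : (d ^ l <= d.+1 ^ l.*2)%N.
    apply: (@leq_trans (d.+1 ^ l)); first by rewrite leq_exp2r.
    by apply: leq_pexp2l => //; rewrite -addnn leq_addr.
  by apply: leq_mul => //; apply: leq_mul.
have h1 := @hatsum_le R n d l fw hat hr.
have h2 : hatsum hat l `^ e <= (cb ^+ 2 * N%:R) `^ e.
  apply: ge0_ler_powR => //.
  by rewrite nnegrE /hatsum !sumr_ge0 // => a _; rewrite sumr_ge0 // => b _; rewrite sumr_ge0 // => w _; apply: cnorm2_ge0.
  by rewrite nnegrE mulr_ge0 ?ler0n ?exprn_ge0.
apply: (le_trans h2).
rewrite powRM ?exprn_ge0 ?ler0n // mulrC ler_pM //; first exact: powR_ge0.
- apply: (@le_trans _ _ (((K%:R : R) `^ (l.*2)%:R) `^ e)).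
    apply: ge0_ler_powR => //; rewrite ?nnegrE ?ler0n ?powR_ge0 //.
    by rewrite powR_mulrn ?ler0n // -natrX ler_nat.
  by rewrite -powRrM /e mulfV ?pnatr_eq0 ?double_eq0 -?lt0n // powRr1 ?ler0n.
- rewrite -powR_mulrn // -powRrM /e.
  suff -> : (2%:R * (l.*2)%:R^-1 : R) = l%:R^-1 by [].
  by rewrite -muln2 natrM; field.
Qed.
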